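(* Let $G=(V,S,\sigma,w,\theta,\pi)$ be a restaking network with $\theta(s)>0$ and $\sum_{v'\in V}w(v',s)>0$ for all $s\in S$, and suppose the cost of a validator in an attack $\alpha$ is replaced by the all-or-nothing cost $c'_v(\alpha)=\sigma(v)$ if $\sum_{s\in S_\alpha}\alpha(v,s)>0$ and $c'_v(\alpha)=0$ otherwise (with total cost $C'(\alpha)=\sum_{v}c'_v(\alpha)$). If for every validator $v\in V$ $$\sum_{s\in S}\frac{w(v,s)}{\sum_{v'\in V}w(v',s)}\cdot\frac{\pi(s)}{\theta(s)}<\sigma(v),$$ then there is no attack $\alpha$ with $S_\alpha\neq\emptyset$ and $C'(\alpha)\le\Pi(\alpha)$; i.e., $G$ is secure under this cost model.
   Context: A restaking network is a tuple $G=(V,S,\sigma,w,\theta,\pi)$ with finite nonempty validator set $V$, finite service set $S$, stake $\sigma:V\to\mathbb{R}_{>0}$, allocation $w:V\times S\to\mathbb{R}_{\ge0}$ with $w(v,s)\le\sigma(v)$, thresholds $\theta:S\to[0,1]$ and prizes $\pi:S\to\mathbb{R}_{>0}$. An attack is $\alpha:V\times S\to\mathbb{R}_{\ge0}$ with $\alpha(v,s)\le w(v,s)$; its attacked services are $S_\alpha=\{s:\sum_v\alpha(v,s)\ge\theta(s)\sum_v w(v,s)\}$ and its prize is $\Pi(\alpha)=\sum_{s\in S_\alpha}\pi(s)$. *)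

(* Defs.v *)
From mathcomp Require Import all_boot all_order all_algebra.
Set Implicit Arguments. Unset Strict Implicit. Unset Printing Implicit Defensive.
Import Order.TTheory GRing.Theory Num.Theory.
Local Open Scope ring_scope.

Record network (R : realFieldType) (V S : finType) := Network {
  stake : V -> R;
  alloc : V -> S -> R;
  thr : S -> R;
  prize : S -> R;
  V_nonempty : (0 < #|V|)%N;
  stake_pos : forall v, 0 < stake v;
  alloc_ge0 : forall v s, 0 <= alloc v s;
  alloc_le_stake : forall v s, alloc v s <= stake v;
  thr_ge0 : forall s, 0 <= thr s;
  thr_le1 : forall s, thr s <= 1;
  prize_pos : forall s, 0 < prize s
}.

Section Defs.
Variables (R : realFieldType) (V S : finType) (G : network R V S).

Definition total_alloc (s : S) : R := \sum_(v : V) alloc G v s.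

Definition is_attack (alpha : V -> S -> R) : Prop :=
  forall v s, 0 <= alpha v s /\ alpha v s <= alloc G v s.

Definition attacked (alpha : V -> S -> R) : {set S} :=
  [set s | thr G s * total_alloc s <= \sum_(v : V) alpha v s].

Definition attack_prize (alpha : V -> S -> R) : R :=
  \sum_(s in attacked alpha) prize G s.

Definition aon_cost (alpha : V -> S -> R) (v : V) : R :=
  if 0 < \sum_(s in attacked alpha) alpha v s then stake G v else 0.

Definition aon_total_cost (alpha : V -> S -> R) : R :=
  \sum_(v : V) aon_cost alpha v.

End Defs.

(* Main.v *)
Require Import Defs.
From mathcomp Require Import all_boot all_order all_algebra.
From mathcomp Require Import ring.
Import Order.TTheory GRing.Theory Num.Theory.
Local Open Scope ring_scope.

Theorem mainTheorem3 (R : realFieldType) (V S : finType) (G : network R V S) :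
  (forall s : S, 0 < thr G s) ->
  (forall s : S, 0 < total_alloc G s) ->
  (forall v : V,
     \sum_(s : S) (alloc G v s / total_alloc G s) * (prize G s / thr G s)
       < stake G v) ->
  ~ exists alpha : V -> S -> R,
      [/\ is_attack G alpha,
          attacked G alpha != set0
        & aon_total_cost G alpha <= attack_prize G alpha].
Proof.
move=> Hthr HT Hsec [alpha [Hatt Hne Hle]].
set A := attacked G alpha in Hne.
set U := [set v | 0 < \sum_(s in A) alpha v s].
set g := fun v s => (alloc G v s / total_alloc G s) * (prize G s / thr G s).
have g0 : forall v s, 0 <= g v s.
  move=> v s; rewrite /g; apply: mulr_ge0; apply: divr_ge0;
   by [apply: alloc_ge0 | apply: ltW | apply: ltW; apply: prize_pos].
have Hout : forall v s, v \notin U -> s \in A -> alpha v s = 0.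
  move=> v s; rewrite inE -leNgt => Hv Hs.
  have Hs0 : \sum_(s in A) alpha v s = 0.
    apply/eqP; rewrite eq_le Hv; apply: sumr_ge0 => i _; exact: (Hatt v i).1.
  exact: (psumr_eq0P (fun i _ => (Hatt v i).1) Hs0).
have Hcost : aon_total_cost G alpha = \sum_(v in U) stake G v.
  rewrite /aon_total_cost [RHS]big_mkcond /=; apply: eq_bigr => v _.
  by rewrite /aon_cost inE.
have HsumU : forall s, s \in A ->
    \sum_(v : V) alpha v s = \sum_(v in U) alpha v s.
  move=> s Hs; rewrite [RHS]big_mkcond /=; apply: eq_bigr => v _.
  by case: ifP => // /negbT Hv; rewrite Hout.
have Hprize : forall s, s \in A -> prize G s <= \sum_(v in U) g v s.
  move=> s Hs.
  have H1 : thr G s * total_alloc G s <= \sum_(v in U) alloc G v s.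
    move: (Hs); rewrite inE => H; apply: (le_trans H); rewrite HsumU //.
    by apply: ler_sum => v _; exact: (Hatt v s).2.
  have -> : \sum_(v in U) g v s =
     (\sum_(v in U) alloc G v s) * (prize G s / (thr G s * total_alloc G s)).
    rewrite mulr_suml; apply: eq_bigr => v _; rewrite /g.
    have := HT s; have := Hthr s; rewrite !lt0r => /andP[t0 _] /andP[T0 _].
    by field; rewrite t0 T0.
  have pos : 0 < thr G s * total_alloc G s by apply: mulr_gt0.
  rewrite -ler_pdivrMr; last by apply: divr_gt0 => //; apply: prize_pos.
  rewrite invf_div mulrCA mulfV ?mulr1 //; apply: lt0r_neq0; exact: prize_pos.
have HPi : attack_prize G alpha <= \sum_(v in U) \sum_(s : S) g v s.
  apply: (@le_trans _ _ (\sum_(s in A) \sum_(v in U) g v s)); first exact: ler_sum.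
  rewrite (exchange_big_dep xpredT) //=.
  rewrite [X in _ <= X]big_mkcond /=; apply: ler_sum => v _; case: ifP => Hv; last first.
    by rewrite big_pred0 // => i; rewrite andbF.
  under eq_bigl do rewrite andbT.
  rewrite [X in _ <= X](bigID (fun s => s \in A)) /= lerDl.
  by apply: sumr_ge0 => s _.
have [u Hu] : exists u, u \in U.
  case/set0Pn: Hne => s Hs.
  case: (pickP (mem U)) => [u Hu | HU]; first by exists u.
  move: (Hs); rewrite inE HsumU // big_pred0; last by move=> v; exact: HU.
  by rewrite leNgt mulr_gt0.
have : \sum_(v in U) \sum_(s : S) g v s < \sum_(v in U) stake G v.
  apply: ltr_sum; first by apply/hasP; exists u; rewrite ?mem_index_enum.
  by move=> v _; apply: Hsec.
by rewrite -Hcost ltNge (le_trans Hle HPi).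
Qed.
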